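(* Let $n\ge3$, let $U\subseteq\mathbb{R}^n$ be a convex open set, and for $1\le i,j\le n$ let $g_{ij}:\mathbb{R}\to\mathbb{R}$ be continuously differentiable functions with $g_{ij}=g_{ji}$, such that for all $x\in U$: $g_{ij}'(x_i+x_j)\ge\ell$ for all $i\ne j$ (for some fixed $\ell>0$) and $g_{ii}'(2x_i)\ge0$ for all $i$. Define $F:U\to\mathbb{R}^n$ by $F(x)=(F_1(x),\dots,F_n(x))$ with $F_i(x)=\sum_{j=1}^n g_{ij}(x_i+x_j)$. Then $F$ is injective on $U$, and for all $d,\hat d\in F(U)$, $$|F^{-1}(d)-F^{-1}(\hat d)|_\infty\le\frac{3n-4}{2\ell(n-1)(n-2)}\,|d-\hat d|_\infty.$$
   Context: $|v|_\infty=\max_i|v_i|$ is the maximum norm on $\mathbb{R}^n$. *)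

(* Defs.v *)
(* classical reals. Points of R^n are encoded as functions
   nat -> R vanishing at indices >= n (coordinates 1..n of the paper are
   indices 0..n-1 here). *)
From Stdlib Require Import Reals Lra Lia.
Open Scope R_scope.

Definition inRn (n : nat) (x : nat -> R) : Prop :=
  forall i : nat, (n <= i)%nat -> x i = 0.

Fixpoint ninf (n : nat) (v : nat -> R) : R :=
  match n with
  | O => 0
  | S k => Rmax (ninf k v) (Rabs (v k))
  end.

Definition vsub (x y : nat -> R) : nat -> R := fun i => x i - y i.

Definition subset_Rn (n : nat) (U : (nat -> R) -> Prop) : Prop :=
  forall x, U x -> inRn n x.

Definition convex_set (U : (nat -> R) -> Prop) : Prop :=
  forall x y t, U x -> U y -> 0 <= t <= 1 ->
    U (fun i => t * x i + (1 - t) * y i).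

(* open in R^n (w.r.t. the max norm, equivalent to the Euclidean topology) *)
Definition open_in_Rn (n : nat) (U : (nat -> R) -> Prop) : Prop :=
  forall x, U x -> exists eps, 0 < eps /\
    forall y, inRn n y -> ninf n (vsub y x) < eps -> U y.

(* F_i(x) = sum_{j=1}^n g_ij(x_i + x_j)  (sum_f_R0 f m = f 0 + ... + f m) *)
Definition Fmap (n : nat) (g : nat -> nat -> R -> R) (x : nat -> R) : nat -> R :=
  fun i => if Nat.ltb i n then sum_f_R0 (fun j => g i j (x i + x j)) (pred n) else 0.

(* Main.v *)
From Stdlib Require Import Reals Lra Lia Psatz.
Open Scope R_scope.
Require Import Defs.

Lemma sum_nonneg (f : nat -> R) (N : nat) :
  (forall j, (j <= N)%nat -> 0 <= f j) -> 0 <= sum_f_R0 f N.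
Proof.
  induction N as [|N IH]; intros hf; simpl.
  - apply hf; lia.
  - assert (0 <= sum_f_R0 f N) by (apply IH; intros; apply hf; lia).
    assert (0 <= f (S N)) by (apply hf; lia). lra.
Qed.

Lemma sum_ge_term (f : nat -> R) (N p : nat) :
  (p <= N)%nat -> (forall j, (j <= N)%nat -> j <> p -> 0 <= f j) ->
  f p <= sum_f_R0 f N.
Proof.
  induction N as [|N IH]; intros hp hf.
  - assert (p = 0%nat) by lia. subst. simpl. lra.
  - simpl. destruct (Nat.eq_dec p (S N)) as [e|ne].
    + subst. assert (0 <= sum_f_R0 f N).
      { apply sum_nonneg. intros k hk. apply hf; lia. }
      lra.
    + assert (f p <= sum_f_R0 f N) by (apply IH; [lia| intros; apply hf; lia]).
      assert (0 <= f (S N)) by (apply hf; lia). lra.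
Qed.

Lemma sum_ext (f g : nat -> R) (N : nat) :
  (forall j, (j <= N)%nat -> f j = g j) -> sum_f_R0 f N = sum_f_R0 g N.
Proof.
  induction N as [|N IH]; intros h; simpl.
  - apply h; lia.
  - rewrite IH by (intros; apply h; lia). rewrite h by lia. reflexivity.
Qed.

Lemma sum_le (f g : nat -> R) (N : nat) :
  (forall j, (j <= N)%nat -> f j <= g j) -> sum_f_R0 f N <= sum_f_R0 g N.
Proof.
  induction N as [|N IH]; intros h; simpl.
  - apply h; lia.
  - assert (sum_f_R0 f N <= sum_f_R0 g N) by (apply IH; intros; apply h; lia).
    assert (f (S N) <= g (S N)) by (apply h; lia). lra.
Qed.

Lemma sum_add (f g : nat -> R) (N : nat) :
  sum_f_R0 (fun j => f j + g j) N = sum_f_R0 f N + sum_f_R0 g N.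
Proof. induction N; simpl; [|rewrite IHN]; ring. Qed.

Lemma sum_scal (c : R) (f : nat -> R) (N : nat) :
  sum_f_R0 (fun j => c * f j) N = c * sum_f_R0 f N.
Proof. induction N; simpl; [|rewrite IHN]; ring. Qed.

Lemma sum_const (c : R) (N : nat) :
  sum_f_R0 (fun _ => c) N = c * (INR N + 1).
Proof. induction N; simpl sum_f_R0; [simpl; ring|rewrite IHN, S_INR; ring]. Qed.

Lemma sum_swap (f : nat -> nat -> R) (N M : nat) :
  sum_f_R0 (fun i => sum_f_R0 (fun j => f i j) M) N =
  sum_f_R0 (fun j => sum_f_R0 (fun i => f i j) N) M.
Proof.
  induction N as [|N IH]; simpl.
  - reflexivity.
  - rewrite IH. rewrite <- sum_add. reflexivity.
Qed.

Lemma sum_sub (f g : nat -> R) (N : nat) :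
  sum_f_R0 f N - sum_f_R0 g N = sum_f_R0 (fun j => f j - g j) N.
Proof. induction N; simpl; [|rewrite <- IHN]; ring. Qed.

Lemma arith (n l D mu S A Q : R) :
  3 <= n -> 0 <= D -> 0 <= mu ->
  (n-2)*mu + S <= D ->
  (n-2)*Q + S*S <= D*A ->
  (forall c, Q - 2*c*A + n*c*c >= (mu - c)*(mu-c)) ->
  A + S >= 2*mu ->
  2*(n-1)*(n-2)*mu <= (3*n-4)*D.
Proof.
  intros hn hD hmu hR hQ hC hF.
  destruct (Rle_or_lt (2*(n-1)*(n-2)*mu) ((3*n-4)*D)) as [h|h]; [exact h|exfalso].
  set (a := n-1). set (b := n-2).
  set (s := mu - S). set (A' := A - mu). set (t := a*mu - D).
  assert (ha : a > 0) by (unfold a; lra).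
  assert (hb : b > 0) by (unfold b; lra).
  assert (h1 : s >= t) by (unfold s, t, a; lra).
  assert (h2 : (Q - mu*mu) * a >= A'*A').
  { specialize (hC (A'/a)).
    assert (E: Q - mu*mu - (A'*A')/a = (Q - 2*(A'/a)*A + n*(A'/a)*(A'/a)) - (mu - A'/a)*(mu-A'/a)).
    { unfold A', a. field. lra. }
    assert (Q - mu*mu - (A'*A')/a >= 0) by lra.
    assert (E2 : (Q - mu*mu)*a - A'*A' = (Q - mu*mu - (A'*A')/a) * a) by (field; lra).
    nra. }
  assert (h3 : b*(mu*mu + (Q-mu*mu)) + (mu - s)*(mu-s) <= D*(mu + A')).
  { unfold s, A', b. nra. }
  assert (h4 : b*mu*mu*a + b*A'*A' + (mu-s)*(mu-s)*a <= D*(mu+A')*a) by nra.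
  assert (h5 : A' >= s) by (unfold A', s; lra).
  assert (ht : 2*b*t > a * D) by (unfold t,a,b; nra).
  assert (h6 : b*(A'*A' - s*s) - a*D*(A'-s) >= 0).
  { assert (b*(A'+s) - a*D >= 0) by nra. nra. }
  assert (h7 : b*mu*mu*a + b*s*s + (mu-s)*(mu-s)*a - D*(mu+s)*a <= 0) by nra.
  assert (h8 : b*(s+t) + a*(s+t - 2*mu) - a*D >= 0).
  { unfold t, a, b in *. nra. }
  assert (h9 : b*mu*mu*a + b*t*t + (mu-t)*(mu-t)*a - D*(mu+t)*a <= 0).
  { assert (E : (b*mu*mu*a + b*s*s + (mu-s)*(mu-s)*a - D*(mu+s)*a) - (b*mu*mu*a + b*t*t + (mu-t)*(mu-t)*a - D*(mu+t)*a) = (s-t)*(b*(s+t) + a*(s+t-2*mu) - a*D)) by ring.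
    nra. }
  assert (E : b*mu*mu*a + b*t*t + (mu-t)*(mu-t)*a - D*(mu+t)*a = (2*a*b*mu - (3*n-4)*D)*(a*mu-D)) by (unfold t,a,b; ring).
  assert (2*a*b*mu - (3*n-4)*D > 0) by (unfold a,b; lra).
  assert (a*mu - D > 0) by (unfold a, b in *; nra).
  nra.
Qed.

Lemma key (N : nat) (c : nat->nat->R) (dl d : nat->R) (l D : R) (p : nat) :
  (2 <= N)%nat -> 0 < l -> (p <= N)%nat ->
  (forall i j, (i<=N)%nat -> (j<=N)%nat -> c i j = c j i) ->
  (forall i j, (i<=N)%nat -> (j<=N)%nat -> i<>j -> l <= c i j) ->
  (forall i, (i<=N)%nat -> 0 <= c i i) ->
  (forall i, (i<=N)%nat -> d i = sum_f_R0 (fun j => c i j * (dl i + dl j)) N) ->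
  (forall i, (i<=N)%nat -> Rabs (d i) <= D) ->
  (forall i, (i<=N)%nat -> Rabs (dl i) <= dl p) ->
  2*((INR N + 1)-1)*((INR N + 1)-2)*(l*dl p) <= (3*(INR N + 1)-4)*D.
Proof.
  intros hN hl hp hsym hoff hdiag hd hD hm.
  set (nR := INR N + 1).
  set (m := dl p).
  set (S := sum_f_R0 dl N).
  set (A := sum_f_R0 (fun j => Rabs (dl j)) N).
  set (Q := sum_f_R0 (fun j => dl j * dl j) N).
  assert (hN3 : 3 <= nR).
  { unfold nR. apply le_INR in hN. simpl in hN. lra. }
  assert (hD0 : 0 <= D) by (pose proof (hD p hp); pose proof (Rabs_pos (d p)); lra).
  assert (hm0 : 0 <= m) by (pose proof (hm p hp); pose proof (Rabs_pos (dl p)); unfold m; lra).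
  assert (hmj : forall j, (j <= N)%nat -> 0 <= m + dl j /\ dl j <= m).
  { intros j hj. pose proof (hm j hj). unfold m. split.
      pose proof (Rle_abs (- dl j)) as hh. rewrite Rabs_Ropp in hh. lra.
    - pose proof (Rle_abs (dl j)). lra. }
  assert (hR : l * (m * nR + S) - 2*l*m <= D).
  { assert (E : d p - l * (m * nR + S) = sum_f_R0 (fun j => (c p j - l) * (m + dl j)) N).
    { rewrite hd by exact hp.
      assert (E1 : m * nR + S = sum_f_R0 (fun j => m + dl j) N).
      { rewrite sum_add, sum_const. unfold S, nR. ring. }
      rewrite E1, <- sum_scal.
      rewrite sum_sub. apply sum_ext. intros j hj. unfold m. ring. }
    assert (hge : (c p p - l) * (m + dl p) <= sum_f_R0 (fun j => (c p j - l) * (m + dl j)) N).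
    { apply (sum_ge_term (fun j => (c p j - l) * (m + dl j))); [exact hp|].
      intros j hj hjp. apply Rmult_le_pos.
      - pose proof (hoff p j hp hj (not_eq_sym hjp)). lra.
      - apply hmj; exact hj. }
    pose proof (hdiag p hp). pose proof (hD p hp). pose proof (Rle_abs (d p)).
    assert (0 <= c p p * (m + dl p)) by (apply Rmult_le_pos; [lra| apply hmj; exact hp]).
    fold m in hge. nra. }

  set (X := sum_f_R0 (fun i => dl i * d i) N).
  assert (hXA : X <= D * A).
  { unfold X, A. rewrite <- sum_scal. apply sum_le. intros i hi.
    pose proof (Rle_abs (dl i * d i)). rewrite Rabs_mult in H.
    pose proof (hD i hi). pose proof (Rabs_pos (dl i)).
    assert (Rabs (dl i) * Rabs (d i) <= Rabs (dl i) * D) by (apply Rmult_le_compat_l; lra).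
    lra. }
  assert (hX1 : X = sum_f_R0 (fun i => sum_f_R0 (fun j => c i j * dl i * (dl i + dl j)) N) N).
  { unfold X. apply sum_ext. intros i hi. rewrite hd by exact hi.
    rewrite <- sum_scal. apply sum_ext. intros j hj. ring. }
  assert (hX2 : X = sum_f_R0 (fun i => sum_f_R0 (fun j => c i j * dl j * (dl i + dl j)) N) N).
  { rewrite sum_swap, hX1. apply sum_ext. intros i hi. apply sum_ext. intros j hj.
    rewrite (hsym j i hj hi). ring. }
  assert (hX3 : 2 * X = sum_f_R0 (fun i => sum_f_R0 (fun j => c i j * ((dl i + dl j) * (dl i + dl j))) N) N).
  { replace (2 * X) with (X + X) by ring. rewrite hX1 at 1. rewrite hX2.
    rewrite <- sum_add. apply sum_ext. intros i hi. rewrite <- sum_add.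
    apply sum_ext. intros j hj. ring. }
  assert (hrow : forall i, (i <= N)%nat ->
     (l*nR - 4*l) * (dl i * dl i) + (2*l*S) * dl i + l*Q <=
     sum_f_R0 (fun j => c i j * ((dl i + dl j) * (dl i + dl j))) N).
  { intros i hi.
    assert (E : sum_f_R0 (fun j => c i j * ((dl i + dl j) * (dl i + dl j))) N
              - l * (nR * (dl i * dl i) + 2 * dl i * S + Q)
              = sum_f_R0 (fun j => (c i j - l) * ((dl i + dl j) * (dl i + dl j))) N).
    { assert (E1 : nR * (dl i * dl i) + 2 * dl i * S + Q =
                   sum_f_R0 (fun j => (dl i + dl j) * (dl i + dl j)) N).
      { transitivity (sum_f_R0 (fun j => (dl i * dl i + (2 * dl i) * dl j) + dl j * dl j) N).
        - rewrite sum_add, sum_add, sum_const, sum_scal. unfold S, Q, nR. ring.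
        - apply sum_ext. intros j hj. ring. }
      rewrite E1, <- sum_scal, sum_sub. apply sum_ext. intros j hj. ring. }
    assert (hge : (c i i - l) * ((dl i + dl i) * (dl i + dl i)) <=
                  sum_f_R0 (fun j => (c i j - l) * ((dl i + dl j) * (dl i + dl j))) N).
    { apply (sum_ge_term (fun j => (c i j - l) * ((dl i + dl j) * (dl i + dl j)))); [exact hi|].
      intros j hj hji. apply Rmult_le_pos.
      - pose proof (hoff i j hi hj (not_eq_sym hji)). lra.
      - pose proof (Rle_0_sqr (dl i + dl j)) as hq. unfold Rsqr in hq. exact hq. }
    pose proof (hdiag i hi).
    assert (0 <= c i i * ((dl i + dl i) * (dl i + dl i))) by (apply Rmult_le_pos; nra).
    nra. }
  assert (hX4 : (l*nR - 4*l) * Q + (2*l*S) * S + l*Q*nR <= 2 * X).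
  { rewrite hX3.
    assert (E : (l*nR - 4*l) * Q + (2*l*S) * S + l*Q*nR =
       sum_f_R0 (fun i => (l*nR - 4*l) * (dl i * dl i) + (2*l*S) * dl i + l*Q) N).
    { rewrite sum_add, sum_add, sum_scal, sum_scal, sum_const. unfold Q, S, nR. ring. }
    rewrite E. apply sum_le. exact hrow. }
  assert (habs2 : forall x, Rabs x * Rabs x = x * x).
  { intros x. rewrite <- Rabs_mult. apply Rabs_pos_eq. nra. }
  assert (hmabs : Rabs (dl p) = m) by (apply Rabs_pos_eq; exact hm0).
  assert (hC : forall c0, l*l*Q - 2*c0*(l*A) + nR*c0*c0 >= (l*m - c0)*(l*m - c0)).
  { intros c0.
    assert (E : l*l*Q - 2*c0*(l*A) + nR*c0*c0 =
       sum_f_R0 (fun j => (l * Rabs (dl j) - c0) * (l * Rabs (dl j) - c0)) N).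
    { transitivity (sum_f_R0 (fun j => (l*l) * (dl j * dl j) + (-2*c0*l) * Rabs (dl j) + c0*c0) N).
      - rewrite sum_add, sum_add, sum_scal, sum_scal, sum_const. unfold Q, A, nR. ring.
      - apply sum_ext. intros j hj. rewrite <- (habs2 (dl j)). ring. }
    rewrite E.
    assert (hh : (l * Rabs (dl p) - c0) * (l * Rabs (dl p) - c0) <=
       sum_f_R0 (fun j => (l * Rabs (dl j) - c0) * (l * Rabs (dl j) - c0)) N).
    { apply (sum_ge_term (fun j => (l * Rabs (dl j) - c0) * (l * Rabs (dl j) - c0))); [exact hp|].
      intros j _ _. pose proof (Rle_0_sqr (l * Rabs (dl j) - c0)) as hq. unfold Rsqr in hq. exact hq. }
    rewrite hmabs in hh. lra. }
  assert (hF : A + S >= 2*m).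
  { assert (hh : Rabs (dl p) + dl p <= sum_f_R0 (fun j => Rabs (dl j) + dl j) N).
    { apply (sum_ge_term (fun j => Rabs (dl j) + dl j)); [exact hp|].
      intros j _ _. pose proof (Rle_abs (- dl j)) as h'. rewrite Rabs_Ropp in h'. lra. }
    rewrite sum_add in hh. rewrite hmabs in hh. unfold A, S, m. unfold m in hh. lra. }
  apply (arith nR l D (l*m) (l*S) (l*A) (l*l*Q)).
  - exact hN3.
  - exact hD0.
  - nra.
  - nra.
  - assert (l * (2*X) <= l * (2 * (D*A))) by (apply Rmult_le_compat_l; lra).
    nra.
  - exact hC.
  - nra.
Qed.
From Stdlib Require Import FunctionalExtensionality.

Lemma ninf_ge n v i : (i < n)%nat -> Rabs (v i) <= ninf n v.
Proof.
  induction n as [|k IH]; intros hi; [lia|]. simpl.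
  destruct (Nat.eq_dec i k) as [->|ne].
  - apply Rmax_r.
  - eapply Rle_trans; [apply IH; lia| apply Rmax_l].
Qed.

Lemma ninf_le n v B : 0 <= B -> (forall i, (i < n)%nat -> Rabs (v i) <= B) -> ninf n v <= B.
Proof.
  induction n as [|k IH]; intros hB h; simpl; [exact hB|].
  apply Rmax_lub; [apply IH; [exact hB| intros; apply h; lia] | apply h; lia].
Qed.

Lemma ninf_ext n v w : (forall i, (i < n)%nat -> Rabs (v i) = Rabs (w i)) -> ninf n v = ninf n w.
Proof.
  induction n as [|k IH]; intros h; simpl; [reflexivity|].
  rewrite IH by (intros; apply h; lia). rewrite h by lia. reflexivity.
Qed.

Lemma ninf_attain n v : (1 <= n)%nat -> exists p, (p < n)%nat /\ ninf n v = Rabs (v p).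
Proof.
  induction n as [|k IH]; intros hn; [lia|].
  destruct k as [|k'].
  - exists 0%nat. split; [lia|]. simpl. apply Rmax_right. apply Rabs_pos.
  - destruct IH as [p [hp he]]; [lia|].
    change (ninf (S (S k')) v) with (Rmax (ninf (S k') v) (Rabs (v (S k')))).
    destruct (Rle_dec (ninf (S k') v) (Rabs (v (S k')))) as [h|h].
    + exists (S k'). split; [lia|]. apply Rmax_right; exact h.
    + exists p. split; [lia|]. rewrite Rmax_left by lra. exact he.
Qed.

Lemma mvt_quot (h h' : R -> R) (u v : R) :
  (forall t, derivable_pt_lim h t (h' t)) -> u <> v ->
  exists t, 0 <= t <= 1 /\ (h u - h v)/(u - v) = h' (t*u + (1-t)*v).
Proof.
  intros hd huv. destruct (Rlt_or_le u v) as [lt|le].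
  - destruct (MVT_cor2 h h' u v lt (fun c _ => hd c)) as [c [e hc]].
    exists ((v - c)/(v - u)). split.
    + split; [unfold Rdiv; apply Rmult_le_pos; [lra| apply Rlt_le, Rinv_0_lt_compat; lra]|].
      apply (Rmult_le_reg_r (v-u)); [lra|]. field_simplify; lra.
    + replace ((v - c) / (v - u) * u + (1 - (v - c) / (v - u)) * v) with c by (field; lra).
      apply (Rmult_eq_reg_r (u - v)); [|lra]. field_simplify; [lra|lra].
  - assert (lt : v < u) by lra.
    destruct (MVT_cor2 h h' v u lt (fun c _ => hd c)) as [c [e hc]].
    exists ((c - v)/(u - v)). split.
    + split; [unfold Rdiv; apply Rmult_le_pos; [lra| apply Rlt_le, Rinv_0_lt_compat; lra]|].
      apply (Rmult_le_reg_r (u-v)); [lra|]. field_simplify; lra.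
    + replace ((c - v) / (u - v) * u + (1 - (c - v) / (u - v)) * v) with c by (field; lra).
      apply (Rmult_eq_reg_r (u - v)); [|lra]. field_simplify; [lra|lra].
Qed.

Definition cf (g : nat -> nat -> R -> R) (l : R) (x y : nat -> R) (i j : nat) : R :=
  if Req_dec_T (x i + x j) (y i + y j) then l
  else (g i j (x i + x j) - g i j (y i + y j)) / ((x i + x j) - (y i + y j)).

Lemma pair_bound
  (n : nat) (U : (nat -> R) -> Prop)
  (g g' : nat -> nat -> R -> R) (l : R)
  (hn : (3 <= n)%nat)
  (hUconv : convex_set U)
  (hgder : forall i j, (i < n)%nat -> (j < n)%nat ->
             forall t, derivable_pt_lim (g i j) t (g' i j t))
  (hgsym : forall i j, (i < n)%nat -> (j < n)%nat -> g i j = g j i)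
  (hl : 0 < l)
  (hoff : forall x, U x -> forall i j, (i < n)%nat -> (j < n)%nat -> i <> j ->
             l <= g' i j (x i + x j))
  (hdiag : forall x, U x -> forall i, (i < n)%nat -> 0 <= g' i i (2 * x i))
  (x y : nat -> R) (Ux : U x) (Uy : U y) (p : nat) (hp : (p < n)%nat)
  (hmax : forall i, (i < n)%nat -> Rabs (vsub x y i) <= vsub x y p) :
  2*(INR n - 1)*(INR n - 2)*(l * vsub x y p) <=
  (3*INR n - 4) * ninf n (vsub (Fmap n g x) (Fmap n g y)).
Proof.
  destruct n as [|N]; [lia|].
  rewrite S_INR.
  apply (key N (cf g l x y) (vsub x y) (vsub (Fmap (S N) g x) (Fmap (S N) g y)) l _ p).
  - lia.
  - exact hl.
  - lia.
  - intros i j hi hj. unfold cf.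
    rewrite (hgsym i j) by lia.
    rewrite (Rplus_comm (x j) (x i)), (Rplus_comm (y j) (y i)). reflexivity.
  - intros i j hi hj hij. unfold cf.
    destruct (Req_dec_T (x i + x j) (y i + y j)) as [e|ne]; [lra|].
    destruct (mvt_quot (g i j) (g' i j) _ _ (hgder i j ltac:(lia) ltac:(lia)) ne) as [t [ht e]].
    rewrite e.
    set (z := fun k => t * x k + (1 - t) * y k).
    assert (Uz : U z) by (apply hUconv; assumption).
    pose proof (hoff z Uz i j ltac:(lia) ltac:(lia) hij) as h.
    replace (z i + z j) with (t * (x i + x j) + (1 - t) * (y i + y j)) in h by (unfold z; ring).
    exact h.
  - intros i hi. unfold cf.
    destruct (Req_dec_T (x i + x i) (y i + y i)) as [e|ne]; [lra|].
    destruct (mvt_quot (g i i) (g' i i) _ _ (hgder i i ltac:(lia) ltac:(lia)) ne) as [t [ht e]].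
    rewrite e.
    set (z := fun k => t * x k + (1 - t) * y k).
    assert (Uz : U z) by (apply hUconv; assumption).
    pose proof (hdiag z Uz i ltac:(lia)) as h.
    replace (2 * z i) with (t * (x i + x i) + (1 - t) * (y i + y i)) in h by (unfold z; ring).
    exact h.
  - intros i hi. unfold vsub, Fmap.
    replace (Nat.ltb i (S N)) with true by (symmetry; apply Nat.ltb_lt; lia).
    simpl pred. rewrite sum_sub. apply sum_ext. intros j hj. unfold cf.
    destruct (Req_dec_T (x i + x j) (y i + y j)) as [e|ne].
    + rewrite e. replace (x i - y i + (x j - y j)) with 0 by lra. ring.
    + replace (x i - y i + (x j - y j)) with ((x i + x j) - (y i + y j)) by ring.
      field. lra.
  - intros i hi. apply ninf_ge. lia.
  - intros i hi. apply hmax. lia.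
Qed.

Lemma final_div (a den m D : R) : 0 < den -> den * m <= a * D -> m <= a / den * D.
Proof.
  intros hd h. apply (Rmult_le_reg_l den); [exact hd|].
  replace (den * (a / den * D)) with (a * D) by (field; lra). exact h.
Qed.

Theorem theorem2p2
  (n : nat) (U : (nat -> R) -> Prop)
  (g g' : nat -> nat -> R -> R) (l : R)
  (hn : (3 <= n)%nat)
  (hUsub : subset_Rn n U) (hUconv : convex_set U) (hUopen : open_in_Rn n U)
  (hgder : forall i j, (i < n)%nat -> (j < n)%nat ->
             forall t, derivable_pt_lim (g i j) t (g' i j t))
  (hgcont : forall i j, (i < n)%nat -> (j < n)%nat -> continuity (g' i j))
  (hgsym : forall i j, (i < n)%nat -> (j < n)%nat -> g i j = g j i)
  (hl : 0 < l)
  (hoff : forall x, U x -> forall i j, (i < n)%nat -> (j < n)%nat -> i <> j ->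
             l <= g' i j (x i + x j))
  (hdiag : forall x, U x -> forall i, (i < n)%nat -> 0 <= g' i i (2 * x i)) :
  (forall x y, U x -> U y -> Fmap n g x = Fmap n g y -> x = y) /\
  (forall x y, U x -> U y ->
     ninf n (vsub x y) <=
     (3 * INR n - 4) / (2 * l * (INR n - 1) * (INR n - 2)) *
     ninf n (vsub (Fmap n g x) (Fmap n g y))).
Proof.
  assert (hn3 : 3 <= INR n) by (apply le_INR in hn; simpl in hn; lra).
  assert (bound : forall x y, U x -> U y ->
     ninf n (vsub x y) <=
     (3 * INR n - 4) / (2 * l * (INR n - 1) * (INR n - 2)) *
     ninf n (vsub (Fmap n g x) (Fmap n g y))).
  { intros x y Ux Uy.
    assert (hden : 0 < 2 * l * (INR n - 1) * (INR n - 2)).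
    { apply Rmult_lt_0_compat; [apply Rmult_lt_0_compat; [lra|lra]|lra]. }
    destruct (ninf_attain n (vsub x y)) as [p [hp he]]; [lia|].
    apply final_div; [exact hden|].
    destruct (Rle_or_lt 0 (vsub x y p)) as [h0|h0].
    - rewrite Rabs_pos_eq in he by exact h0.
      assert (hmax : forall i, (i < n)%nat -> Rabs (vsub x y i) <= vsub x y p).
      { intros i hi. rewrite <- he. apply ninf_ge. exact hi. }
      pose proof (pair_bound n U g g' l hn hUconv hgder hgsym hl hoff hdiag x y Ux Uy p hp hmax).
      rewrite he. nra.
    - rewrite Rabs_left in he by exact h0.
      assert (hyx : forall i, vsub y x i = - vsub x y i) by (intros; unfold vsub; ring).
      assert (hmax : forall i, (i < n)%nat -> Rabs (vsub y x i) <= vsub y x p).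
      { intros i hi. rewrite hyx, hyx, Rabs_Ropp, <- he. apply ninf_ge. exact hi. }
      pose proof (pair_bound n U g g' l hn hUconv hgder hgsym hl hoff hdiag y x Uy Ux p hp hmax) as hb.
      rewrite (ninf_ext n (vsub (Fmap n g y) (Fmap n g x)) (vsub (Fmap n g x) (Fmap n g y))) in hb
        by (intros i _; unfold vsub; apply Rabs_minus_sym).
      rewrite hyx in hb. rewrite he. nra. }
  split; [|exact bound].
  intros x y Ux Uy hF.
  pose proof (bound x y Ux Uy) as hb.
  assert (h0 : ninf n (vsub (Fmap n g x) (Fmap n g y)) <= 0).
  { apply ninf_le; [lra|]. intros i _. rewrite hF. unfold vsub.
    replace (Fmap n g y i - Fmap n g y i) with 0 by ring. rewrite Rabs_R0. lra. }
  assert (h1 : ninf n (vsub x y) <= 0).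
  { assert (0 <= ninf n (vsub (Fmap n g x) (Fmap n g y))).
    { eapply Rle_trans; [apply Rabs_pos| apply (ninf_ge n _ 0%nat); lia]. }
    assert (0 <= (3 * INR n - 4) / (2 * l * (INR n - 1) * (INR n - 2))).
    { unfold Rdiv. apply Rmult_le_pos; [lra|]. apply Rlt_le, Rinv_0_lt_compat.
      apply Rmult_lt_0_compat; [apply Rmult_lt_0_compat; [lra|lra]|lra]. }
    assert (hz : ninf n (vsub (Fmap n g x) (Fmap n g y)) = 0) by lra.
    rewrite hz, Rmult_0_r in hb. exact hb. }
  apply functional_extensionality. intros i.
  destruct (Nat.lt_ge_cases i n) as [hi|hi].
  - pose proof (ninf_ge n (vsub x y) i hi) as ha.
    change (vsub x y i) with (x i - y i) in ha.
    pose proof (Rabs_pos (x i - y i)) as hb2.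
    assert (hz : Rabs (x i - y i) = 0) by lra.
    destruct (Req_dec (x i - y i) 0) as [hq|hq]; [lra|]. exfalso. apply (Rabs_no_R0 _ hq). exact hz.
  - rewrite (hUsub x Ux i hi), (hUsub y Uy i hi). reflexivity.
Qed.
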